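(* Let $\Omega\subseteq\mathbb{R}^3$ be open and $R\in C^2(\Omega;SO(3))$ with $\operatorname{curl}R=\alpha$ for some constant matrix $\alpha\in\mathbb{R}^{3\times3}$. Then: (i) $\operatorname{div}R_i=\varepsilon_{ijk}\,\alpha_j\cdot R_k$ for $i\in\{1,2,3\}$; (ii) $\Delta R_i=\varepsilon_{ijk}\nabla(\alpha_j\cdot R_k)$ for $i\in\{1,2,3\}$; (iii) $|\nabla R|^2=-\mathrm{tr}(R^T\alpha R^T\alpha)$; (iv) $\mathrm{tr}(R^T\alpha R^T\alpha)=|(R^T\alpha)_{sym}|^2-|(R^T\alpha)_{skew}|^2$; (v) if $R(x_0)=Id$ for some $x_0\in\Omega$, then $|\operatorname{div}(R)(x_0)|^2=2|\alpha_{skew}|^2$; (vi) $\sum_{i=1}^3|(\nabla R_i)_{sym}|^2\ge\frac13|\operatorname{div}(R)|^2$; (vii) $\sum_{i=1}^3|(\nabla R_i)_{skew}|^2=\frac12|\alpha|^2$. All identities hold pointwise in $\Omega$.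
   Context: Einstein summation convention is used; $\varepsilon_{ijk}$ is the sign of the permutation $(ijk)$. For a matrix $A$, $A_i$ denotes its $i$-th row. $\operatorname{curl}$ of a matrix field is taken row-wise: $(\operatorname{curl}R)_{ij}=\varepsilon_{jkl}\partial_kR_{il}$, so $\alpha_j$ is the $j$-th row of $\alpha$. $\operatorname{div}R_i=\sum_l\partial_lR_{il}$ and $\operatorname{div}(R)$ is the vector $(\operatorname{div}R_1,\operatorname{div}R_2,\operatorname{div}R_3)$. $\nabla R_i$ is the $3\times3$ gradient matrix of the row $R_i$, and $|\nabla R|^2=\sum_{k,l,m}(\partial_mR_{kl})^2$. $A_{sym}=\frac12(A+A^T)$, $A_{skew}=\frac12(A-A^T)$, $|A|^2=A:A=\mathrm{tr}(A^TA)$. *)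

(* Defs.v *)
From HB Require Import structures.
From mathcomp Require Import all_boot all_order all_algebra.
From mathcomp Require Import all_classical all_reals all_analysis.
Set Implicit Arguments. Unset Strict Implicit. Unset Printing Implicit Defensive.
Import Order.TTheory GRing.Theory Num.Theory.
Import numFieldNormedType.Exports.
Local Open Scope classical_set_scope.
Local Open Scope ring_scope.

Section Defs.
Variable R : realType.

Definition pt := 'rV[R]_3.

Definition ek (k : 'I_3) : pt := delta_mx 0 k.

Definition pd (k : 'I_3) (f : pt -> R) (x : pt) : R := derive f x (ek k).

(* Levi-Civita symbol: sign of the permutation (i j k), 0 if not a permutation;
   = det of the matrix whose rows are e_i, e_j, e_k *)
Definition eps (i j k : 'I_3) : R :=
  \det (\matrix_(r < 3) (ek (nth i [:: i; j; k] r))).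

Definition C2_on (O : set pt) (f : pt -> R) : Prop :=
  forall x, O x ->
    {for x, continuous f} /\
    (forall k, derivable f x (ek k)) /\
    (forall k, {for x, continuous (pd k f)}) /\
    (forall k l, derivable (pd k f) x (ek l)) /\
    (forall k l, {for x, continuous (pd l (pd k f))}).

Definition C2_mx_on (O : set pt) (F : pt -> 'M[R]_3) : Prop :=
  forall i j, C2_on O (fun y => F y i j).

Definition SO3_valued (O : set pt) (F : pt -> 'M[R]_3) : Prop :=
  forall x, O x -> (F x)^T *m F x = 1%:M /\ \det (F x) = 1.

Definition curl (F : pt -> 'M[R]_3) (x : pt) : 'M[R]_3 :=
  \matrix_(i, j) \sum_(k < 3) \sum_(l < 3) eps j k l * pd k (fun y => F y i l) x.

Definition divrow (F : pt -> 'M[R]_3) (i : 'I_3) (x : pt) : R :=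
  \sum_(l < 3) pd l (fun y => F y i l) x.

Definition gradrow (F : pt -> 'M[R]_3) (i : 'I_3) (x : pt) : 'M[R]_3 :=
  \matrix_(l, m) pd m (fun y => F y i l) x.

Definition gradnorm2 (F : pt -> 'M[R]_3) (x : pt) : R :=
  \sum_(k < 3) \sum_(l < 3) \sum_(m < 3) (pd m (fun y => F y k l) x) ^+ 2.

Definition lap (f : pt -> R) (x : pt) : R := \sum_(m < 3) pd m (pd m f) x.

Definition rowdot (A B : 'M[R]_3) (j k : 'I_3) : R := \sum_(m < 3) A j m * B k m.

Definition sym_part (A : 'M[R]_3) : 'M[R]_3 := 2^-1 *: (A + A^T).
Definition skew_part (A : 'M[R]_3) : 'M[R]_3 := 2^-1 *: (A - A^T).
Definition fnorm2 (A : 'M[R]_3) : R := \tr (A^T *m A).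

End Defs.

Arguments eps {R}.
Arguments ek {R}.

(* Main.v *)
Require Import Defs.
From HB Require Import structures.
From mathcomp Require Import all_boot all_order all_algebra.
From mathcomp Require Import all_classical all_reals all_analysis.
From mathcomp Require Import ring lra.
Set Implicit Arguments. Unset Strict Implicit. Unset Printing Implicit Defensive.
Import Order.TTheory GRing.Theory Num.Theory.
Import numFieldNormedType.Exports.
Local Open Scope classical_set_scope.
Local Open Scope ring_scope.
Section Sch.
Variable R : realType.
Variable V : normedModType R.

Lemma near2 (u v x : V) (A : set V) : nbhs x A ->
  exists2 eta : R, 0 < eta & forall s t : R, `|s| < eta -> `|t| < eta ->
    A (s *: u + (t *: v + x)).
Proof.
move/nbhs_ballP => [d /= d0 dA].
have M0 : 0 < `|u| + `|v| + 1 by rewrite ltr_pwDr // addr_ge0.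
exists (d / (`|u| + `|v| + 1)); first by rewrite divr_gt0.
move=> s t hs ht; apply: dA; rewrite -ball_normE /ball_ /=.
have -> : x - (s *: u + (t *: v + x)) = - (s *: u + t *: v) by rewrite addrA (addrC _ x) opprD addrA subrr add0r.
rewrite normrN.
rewrite (le_lt_trans (ler_normD _ _)) // !normrZ.
apply: (@le_lt_trans _ _ (d / (`|u| + `|v| + 1) * (`|u| + `|v|))).
  rewrite mulrDr lerD // ler_wpM2r //; exact: ltW.
rewrite -[ltRHS](@divfK _ (`|u| + `|v| + 1)) ?gt_eqF //.
by rewrite ltr_pM2l ?divr_gt0 // ltrDl.
Qed.

Lemma line_derivable (f : V -> R) (u p : V) (s0 : R) :
  derivable (fun s : R => f (s *: u + p)) s0 1 <-> derivable f (s0 *: u + p) u.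
Proof.
rewrite /derivable.
suff -> : (fun h : R => h^-1 *: (((fun s : R => f (s *: u + p)) \o shift s0) (h *: 1) - f (s0 *: u + p))) = (fun h => h^-1 *: ((f \o shift (s0 *: u + p)) (h *: u) - f (s0 *: u + p))) by [].
by apply/funext => h /=; rewrite [h *: 1]mulr1 scalerDl addrA.
Qed.

Lemma line_derive (f : V -> R) (u p : V) (s0 : R) :
  derive (fun s : R => f (s *: u + p)) s0 1 = derive f (s0 *: u + p) u.
Proof.
rewrite /derive.
suff -> : (fun h : R => h^-1 *: (((fun s : R => f (s *: u + p)) \o shift s0) (h *: 1) - f (s0 *: u + p))) = (fun h => h^-1 *: ((f \o shift (s0 *: u + p)) (h *: u) - f (s0 *: u + p))) by [].
by apply/funext => h /=; rewrite [h *: 1]mulr1 scalerDl addrA.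
Qed.

Lemma mvt_line (f : V -> R) (u p : V) (h : R) : 0 < h ->
  (forall s, 0 <= s <= h -> derivable f (s *: u + p) u) ->
  exists2 s, 0 <= s <= h &
    f (h *: u + p) - f p = derive f (s *: u + p) u * h.
Proof.
move=> h0 hd.
have hd' : forall s, s \in `[0, h] -> derivable (fun s : R => f (s *: u + p)) s 1.
  by move=> s; rewrite in_itv /= => /hd /(line_derivable f u p s).2.
have := @MVT_segment R (fun s : R => f (s *: u + p)) (fun s => derive f (s *: u + p) u) 0 h (ltW h0).
case.
- move=> s; rewrite in_itv /= => /andP[s0 sh].
  have sin : s \in `[0, h] by rewrite in_itv /= !ltW.
  apply: DeriveDef; first exact: hd'.
  exact: line_derive.
- exact: derivable_within_continuous.
- move=> s; rewrite in_itv /= => sin; rewrite scale0r add0r subr0 => E.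
  by exists s.
Qed.

Lemma delta_mvt (f : V -> R) (u v x : V) (h : R) : 0 < h ->
  (forall s t, 0 <= s <= h -> 0 <= t <= h ->
     derivable f (s *: u + (t *: v + x)) u /\
     derivable (fun y => derive f y u) (s *: u + (t *: v + x)) v) ->
  exists s, exists2 t, 0 <= s <= h /\ 0 <= t <= h &
   f (h *: u + (h *: v + x)) - f (h *: u + x) - (f (h *: v + x) - f x) =
     h ^+ 2 * derive (fun y => derive f y u) (s *: u + (t *: v + x)) v.
Proof.
move=> h0 hd.
have h0' : 0 <= h <= h by rewrite lexx ltW.
have z0 : 0 <= (0:R) <= h by rewrite lexx ltW.
set g := fun s : R => f (s *: u + (h *: v + x)) - f (s *: u + x).
have gd : forall s, s \in `[0, h] -> derivable g s 1 /\
   derive g s 1 = derive f (s *: u + (h *: v + x)) u - derive f (s *: u + x) u.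
  move=> s; rewrite in_itv /= => sh.
  have [d1 _] := hd s h sh h0'.
  have [d2 _] := hd s 0 sh z0; rewrite scale0r add0r in d2.
  have d1' := (line_derivable f u (h *: v + x) s).2 d1.
  have d2' := (line_derivable f u x s).2 d2.
  split; first exact: derivableB.
  by rewrite deriveB // !line_derive.
have := @MVT_segment R g (fun s => derive f (s *: u + (h *: v + x)) u - derive f (s *: u + x) u) 0 h (ltW h0).
case.
- move=> s; rewrite in_itv /= => /andP[s0 sh].
  have sin : s \in `[0, h] by rewrite in_itv /= !ltW.
  have [? ?] := gd s sin.
  by apply: DeriveDef.
- apply: derivable_within_continuous => s sin; exact: (gd s sin).1.
move=> s1; rewrite in_itv /= => s1h; rewrite subr0 /g !scale0r !add0r => E1.
have := @mvt_line (fun y => derive f y u) v (s1 *: u + x) h h0.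
case.
  move=> t th; rewrite addrCA; exact: (hd s1 t s1h th).2.
move=> t th E2.
exists s1; exists t => //.
rewrite E1 (addrCA (s1 *: u) (h *: v)).
rewrite E2 (addrCA (t *: v)) expr2 mulrC mulrA.
by rewrite mulrAC.
Qed.

Lemma close3 (a b d : R) : `|a - d| < `|a - b| / 3 -> `|b - d| < `|a - b| / 3 -> a = b.
Proof.
move=> h1 h2; apply/eqP; apply/negPn/negP => neq.
have : `|a - b| <= `|a - d| + `|b - d|.
  rewrite (_ : a - b = (a - d) + - (b - d)); last by ring.
  by rewrite -(normrN (b - d)) ler_normD.
have : 0 < `|a - b| by rewrite normr_gt0 subr_eq0.
lra.
Qed.

Lemma schwarz_gen (f : V -> R) (u v x : V) (A : set V) :
  nbhs x A ->
  (forall y, A y -> [/\ derivable f y u, derivable f y v,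
      derivable (fun z => derive f z u) y v & derivable (fun z => derive f z v) y u]) ->
  {for x, continuous (fun y => derive (fun z => derive f z u) y v)} ->
  {for x, continuous (fun y => derive (fun z => derive f z v) y u)} ->
  derive (fun z => derive f z u) x v = derive (fun z => derive f z v) x u.
Proof.
move=> nA hA c1 c2.
set a := derive (fun z => derive f z u) x v.
set b := derive (fun z => derive f z v) x u.
apply/eqP; apply/negPn/negP => neq.
have e0 : 0 < `|a - b| / 3 by rewrite divr_gt0 // normr_gt0 subr_eq0.
have N1 : \forall y \near x, `|a - derive (fun z => derive f z u) y v| < `|a - b| / 3 := cvgr_dist_lt _ _ c1 _ e0.
have N2 : \forall y \near x, `|b - derive (fun z => derive f z v) y u| < `|a - b| / 3 := cvgr_dist_lt _ _ c2 _ e0.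
have FF : Filter (nbhs x) by exact: nbhs_filter.
have N := @filterI _ _ FF _ _ nA (@filterI _ _ FF _ _ (N1 FF) (N2 FF)).
have [eta eta0 Heta] := near2 u v N.
set h := eta / 2.
have h0 : 0 < h by rewrite divr_gt0.
have hlt : h < eta by rewrite /h ltr_pdivrMr // ltr_pMr // ltr1n.
have inI : forall s, 0 <= s <= h -> `|s| < eta.
  move=> s /andP[s0 sh]; rewrite ger0_norm //; exact: le_lt_trans hlt.
have := @delta_mvt f u v x h h0.
case.
  move=> s t sh th; have [Ay _] := Heta s t (inI s sh) (inI t th).
  by have [d1 _ d3 _] := hA _ Ay.
move=> s1 [t1 [s1h t1h] E1].
have := @delta_mvt f v u x h h0.
case.
  move=> s t sh th; have [Ay _] := Heta t s (inI t th) (inI s sh).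
  rewrite addrCA in Ay.
  by have [_ d2 _ d4] := hA _ Ay.
move=> s2 [t2 [s2h t2h] E2].
have [_ [L1 _]] := Heta s1 t1 (inI s1 s1h) (inI t1 t1h).
have [_ [_ L2]] := Heta t2 s2 (inI t2 t2h) (inI s2 s2h).
rewrite /= (addrCA (t2 *: u)) in L2.
have E : derive (fun z => derive f z u) (s1 *: u + (t1 *: v + x)) v =
         derive (fun y => derive f y v) (s2 *: v + (t2 *: u + x)) u.
  apply: (mulfI (_ : h ^+ 2 != 0)); first by rewrite expf_neq0 // gt_eqF.
  rewrite -E1 -E2 (addrCA (h *: v)); ring.
move: L1 L2; rewrite E => L1 L2.
by move/eqP: neq; apply; apply: close3 L1 L2.
Qed.
End Sch.

Section E.
Variable R : realType.
Definition i0 : 'I_3 := @Ordinal 3 0 isT.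
Definition i1 : 'I_3 := @Ordinal 3 1 isT.
Definition i2 : 'I_3 := @Ordinal 3 2 isT.
Definition j0 : 'I_2 := @Ordinal 2 0 isT.
Definition j1 : 'I_2 := @Ordinal 2 1 isT.
Lemma sum2 (F : 'I_2 -> R) : \sum_(i < 2) F i = F j0 + F j1.
Proof.
rewrite !big_ord_recl big_ord0 addr0.
by congr (F _ + F _); apply: val_inj.
Qed.
Lemma sum3 (F : 'I_3 -> R) : \sum_(i < 3) F i = F i0 + F i1 + F i2.
Proof.
rewrite !big_ord_recl big_ord0 addr0 addrA.
by congr (F _ + F _ + F _); apply: val_inj.
Qed.
Lemma l00 : lift i0 j0 = i1. Proof. exact: val_inj. Qed.
Lemma l01 : lift i0 j1 = i2. Proof. exact: val_inj. Qed.
Lemma l10 : lift i1 j0 = i0. Proof. exact: val_inj. Qed.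
Lemma l11 : lift i1 j1 = i2. Proof. exact: val_inj. Qed.
Lemma l20 : lift i2 j0 = i0. Proof. exact: val_inj. Qed.
Lemma l21 : lift i2 j1 = i1. Proof. exact: val_inj. Qed.
Lemma m00 : lift j0 (0 : 'I_1) = j1. Proof. exact: val_inj. Qed.
Lemma m10 : lift j1 (0 : 'I_1) = j0. Proof. exact: val_inj. Qed.
Lemma det2 (A : 'M[R]_2) : \det A = A j0 j0 * A j1 j1 - A j0 j1 * A j1 j0.
Proof.
rewrite (expand_det_row _ j0) sum2 /cofactor !det_mx11 !mxE /= m00 m10.
rewrite expr0 expr1; ring.
Qed.
Lemma det3 (A : 'M[R]_3) : \det A =
  A i0 i0 * (A i1 i1 * A i2 i2 - A i1 i2 * A i2 i1)
  - A i0 i1 * (A i1 i0 * A i2 i2 - A i1 i2 * A i2 i0)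
  + A i0 i2 * (A i1 i0 * A i2 i1 - A i1 i1 * A i2 i0).
Proof.
rewrite (expand_det_row _ i0) sum3 /cofactor !det2 !mxE /=.
rewrite !l00 !l01 !l10 !l11 !l20 !l21 /= !expr0 ?expr1 ?expr2; ring.
Qed.
Definition epst (i j k : 'I_3) : R :=
  match nat_of_ord i, nat_of_ord j, nat_of_ord k with
  | 0, 1, 2 => 1 | 1, 2, 0 => 1 | 2, 0, 1 => 1
  | 0, 2, 1 => -1 | 2, 1, 0 => -1 | 1, 0, 2 => -1
  | _, _, _ => 0 end.
Lemma ord3 (i : 'I_3) : i = i0 \/ i = i1 \/ i = i2.
Proof. by case: i => [[|[|[|?]]] ?]; [left|right;left|right;right|by []]; exact: val_inj. Qed.
Lemma eps_epst i j k : eps i j k = epst i j k.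
Proof.
rewrite /eps det3 !mxE /=.
by case: (ord3 i) => [->|[->|->]]; case: (ord3 j) => [->|[->|->]];
  case: (ord3 k) => [->|[->|->]]; rewrite /epst /=; ring.
Qed.

Lemma cross_SO3 (A : 'M[R]_3) : A^T *m A = 1%:M -> \det A = 1 ->
  forall p m n, \sum_(q < 3) \sum_(s < 3) epst q p s * A s m * A q n =
                \sum_(b < 3) A p b * epst b m n.
Proof.
move=> hO hD.
have hO' : A *m A^T = 1%:M by apply: mulmx1C.
have adjT : \adj A = A^T.
  by rewrite -[\adj A]mulmx1 -hO' mulmxA mul_adj_mx hD mul1mx.
have E : forall p b, A p b = \adj A b p by move=> p b; rewrite adjT mxE.
move=> p m n.
under [RHS]eq_bigr do rewrite E.
rewrite !sum3 !mxE /cofactor !det2 !mxE.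
by case: (ord3 p) => [->|[->|->]]; case: (ord3 m) => [->|[->|->]]; case: (ord3 n) => [->|[->|->]];
  rewrite !l00 !l01 !l10 !l11 !l20 !l21 /epst /= !exprS !expr0; ring.
Qed.

Definition Wc (c : 'I_3 -> 'I_3 -> 'I_3 -> R) p j :=
  \sum_(q < 3) \sum_(s < 3) epst q p s * c s j q.

Lemma skew0 (c : 'I_3 -> 'I_3 -> 'I_3 -> R) :
  (forall s k p, c s k p = - c s p k) -> forall s k, c s k k = 0.
Proof. move=> sk s k; have := sk s k k; lra. Qed.

Lemma core_iii (c : 'I_3 -> 'I_3 -> 'I_3 -> R) :
  (forall s k p, c s k p = - c s p k) ->
  \sum_(i < 3) \sum_(j < 3) \sum_(k < 3) epst i j k * \sum_(p < 3) c i k p * Wc c p j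
  = \sum_(i < 3) \sum_(j < 3) Wc c i j * Wc c j i.
Proof.
move=> sk; have z := skew0 sk.
rewrite /Wc !sum3 /epst /=.
rewrite !(sk _ i1 i0) !(sk _ i2 i0) !(sk _ i2 i1) !z.
ring.
Qed.

Lemma sum_delta (G : 'I_3 -> R) n : \sum_(q < 3) G q * (q == n)%:R = G n.
Proof.
rewrite (bigD1 n) //= eqxx mulr1 big1 ?addr0 // => q /negbTE ->.
by rewrite mulr0.
Qed.

Lemma core_i (c : 'I_3 -> 'I_3 -> 'I_3 -> R) i :
  (forall s k p, c s k p = - c s p k) ->
  \sum_(s < 3) c s i s = \sum_(j < 3) \sum_(k < 3) epst i j k * Wc c k j.
Proof.
move=> sk; have z := skew0 sk.
have : i = i0 \/ i = i1 \/ i = i2.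
  case: i => [[|[|[|?]]] ?]; [left|right;left|right;right|by []]; exact: val_inj.
move=> [->|[->|->]]; rewrite /Wc !sum3 /epst /=;
rewrite !(sk _ i1 i0) !(sk _ i2 i0) !(sk _ i2 i1) !z; ring.
Qed.

Section Frame.
Variables (r : 'I_3 -> 'I_3 -> R) (D : 'I_3 -> 'I_3 -> 'I_3 -> R) (a : 'I_3 -> 'I_3 -> R).
Hypothesis Hcol : forall q n, \sum_(p < 3) r p q * r p n = (q == n)%:R.
Hypothesis Hcross : forall p m n,
  \sum_(q < 3) \sum_(s < 3) epst q p s * r s m * r q n = \sum_(b < 3) r p b * epst b m n.
Hypothesis Hsk : forall m k p, \sum_(q < 3) (D m k q * r p q + r k q * D m p q) = 0.
Hypothesis Hcurl : forall j n, a j n = \sum_(m < 3) \sum_(l < 3) epst n m l * D m j l.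

Definition cf s j p := \sum_(m < 3) \sum_(q < 3) r s m * D m j q * r p q.

Lemma cf_skew s k p : cf s k p = - cf s p k.
Proof.
have E : cf s k p + cf s p k =
   \sum_(m < 3) r s m * \sum_(q < 3) (D m k q * r p q + r k q * D m p q).
  by rewrite /cf !sum3; ring.
move: E; rewrite big1 => [E|m _]; last by rewrite Hsk mulr0.
by apply/eqP; rewrite -subr_eq0 opprK E.
Qed.

Lemma fact2 i k n : \sum_(l < 3) r i l * D l k n = \sum_(p < 3) cf i k p * r p n.
Proof.
have E : \sum_(p < 3) cf i k p * r p n =
   \sum_(m < 3) \sum_(q < 3) r i m * D m k q * (\sum_(p < 3) r p q * r p n).
  by rewrite /cf !sum3; ring.
rewrite E; apply: eq_bigr => m _.
under eq_bigr do rewrite Hcol.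
by rewrite sum_delta.
Qed.

Lemma fact1 p j : \sum_(n < 3) r p n * a j n = Wc cf p j.
Proof.
have E : Wc cf p j = \sum_(m < 3) \sum_(n < 3) D m j n *
     (\sum_(q < 3) \sum_(s < 3) epst q p s * r s m * r q n).
  by rewrite /Wc /cf !sum3; ring.
rewrite E.
under [RHS]eq_bigr => m _ do under eq_bigr => n _ do rewrite Hcross.
under [LHS]eq_bigr do rewrite Hcurl.
by rewrite !sum3; ring.
Qed.

Lemma alg_i i : \sum_(l < 3) D l i l =
   \sum_(j < 3) \sum_(k < 3) epst i j k * \sum_(m < 3) a j m * r k m.
Proof.
have E : \sum_(s < 3) cf s i s = \sum_(m < 3) \sum_(q < 3) (\sum_(s < 3) r s m * r s q) * D m i q.
  by rewrite /cf !sum3; ring.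
have E2 : \sum_(l < 3) D l i l = \sum_(s < 3) cf s i s.
  rewrite E; apply: eq_bigr => m _.
  under [RHS]eq_bigr do rewrite Hcol eq_sym mulrC.
  by rewrite sum_delta.
rewrite E2 (core_i i cf_skew).
apply: eq_bigr => j _; apply: eq_bigr => k _; congr (_ * _).
rewrite -fact1; apply: eq_bigr => m _; exact: mulrC.
Qed.

Lemma alg_iii :
  \sum_(i < 3) \sum_(l < 3) r i l * (\sum_(j < 3) \sum_(k < 3) epst i j k * \sum_(n < 3) a j n * D l k n)
  = \sum_(i < 3) \sum_(j < 3) (\sum_(n < 3) r i n * a j n) * (\sum_(n < 3) r j n * a i n).
Proof.
have E : \sum_(i < 3) \sum_(l < 3) r i l * (\sum_(j < 3) \sum_(k < 3) epst i j k * \sum_(n < 3) a j n * D l k n)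
  = \sum_(i < 3) \sum_(j < 3) \sum_(k < 3) epst i j k * \sum_(n < 3) a j n * (\sum_(l < 3) r i l * D l k n).
  by rewrite !sum3; ring.
rewrite E.
under eq_bigr => i _ do under eq_bigr => j _ do under eq_bigr => k _ do under eq_bigr => n _ do rewrite fact2.
have E2 : forall i j k, \sum_(n < 3) a j n * (\sum_(p < 3) cf i k p * r p n) =
   \sum_(p < 3) cf i k p * (\sum_(n < 3) r p n * a j n).
  by move=> i j k; rewrite !sum3; ring.
under eq_bigr => i _ do under eq_bigr => j _ do under eq_bigr => k _ do rewrite E2.
under eq_bigr => i _ do under eq_bigr => j _ do under eq_bigr => k _ do under eq_bigr => p _ do rewrite fact1.
under [RHS]eq_bigr => i _ do under eq_bigr => j _ do rewrite !fact1.
exact: core_iii cf_skew.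
Qed.
End Frame.
End E.

Section M.
Variable R : realType.
Implicit Types (f g : pt R -> R) (y : pt R) (v : pt R).

Lemma dM f g y v : derivable f y v -> derivable g y v ->
  derive (fun z => f z * g z) y v = f y * derive g y v + g y * derive f y v.
Proof. move=> df dg; exact: (deriveM df dg). Qed.

Lemma dvM f g y v : derivable f y v -> derivable g y v ->
  derivable (fun z => f z * g z) y v.
Proof. move=> df dg; exact: (derivableM df dg). Qed.

Lemma dsum3 (h : 'I_3 -> pt R -> R) y v : (forall i, derivable (h i) y v) ->
  derive (fun z => \sum_(i < 3) h i z) y v = \sum_(i < 3) derive (h i) y v.
Proof.
move=> dh.
have -> : (fun z => \sum_(i < 3) h i z) = (h i0 + h i1 + h i2).
  by apply/funext => z; rewrite sum3.
by rewrite !deriveD ?sum3 //; apply: derivableD.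
Qed.

Lemma dvsum3 (h : 'I_3 -> pt R -> R) y v : (forall i, derivable (h i) y v) ->
  derivable (fun z => \sum_(i < 3) h i z) y v.
Proof.
move=> dh.
have -> : (fun z => \sum_(i < 3) h i z) = (h i0 + h i1 + h i2).
  by apply/funext => z; rewrite sum3.
by apply: derivableD => //; apply: derivableD.
Qed.

Lemma dZ (c : R) f y v : derivable f y v ->
  derive (fun z => c * f z) y v = c * derive f y v.
Proof. move=> df; exact: (deriveMl c df). Qed.

Lemma dvZ (c : R) f y v : derivable f y v -> derivable (fun z => c * f z) y v.
Proof. move=> df; exact: (derivableM (derivable_cst c y v) df). Qed.

Lemma dDc (c : R) f y v : derivable f y v ->
  derive (fun z => f z + c) y v = derive f y v.
Proof.
move=> df; have := deriveD df (derivable_cst c y v).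
by rewrite derive_cst addr0.
Qed.

Lemma dloc (O : set (pt R)) f g y v : open O -> O y ->
  (forall z, O z -> f z = g z) -> derive f y v = derive g y v.
Proof.
move=> oO Oy fg; apply: near_eq_derive.
have nO : nbhs y O by apply: open_nbhs_nbhs.
by apply: filterS nO.
Qed.

Lemma schwarz_pd (O : set (pt R)) f x k l : open O -> O x -> C2_on O f ->
  pd l (pd k f) x = pd k (pd l f) x.
Proof.
move=> oO Ox C2.
have nO : nbhs x O by apply: open_nbhs_nbhs.
rewrite /pd; apply: (@schwarz_gen R (pt R) f (ek k) (ek l) x O nO).
- move=> y Oy; have [_ [d1 [_ [d2 _]]]] := C2 y Oy.
  by split; [exact: d1|exact: d1|exact: d2|exact: d2].
- by have [_ [_ [_ [_ c]]]] := C2 x Ox; exact: c.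
- by have [_ [_ [_ [_ c]]]] := C2 x Ox; exact: c.
Qed.

Lemma tr_sq (B : 'M[R]_3) :
  \tr (B *m B) = fnorm2 (sym_part B) - fnorm2 (skew_part B).
Proof.
rewrite /fnorm2 /sym_part /skew_part /mxtrace !sum3 !mxE !sum3 !mxE.
by field; rewrite ?pnatr_eq0.
Qed.

Lemma v_alg (a : 'M[R]_3) :
  \sum_(i < 3) (\sum_(j < 3) \sum_(k < 3) eps i j k * rowdot a 1%:M j k) ^+ 2
  = 2 * fnorm2 (skew_part a).
Proof.
rewrite /rowdot /fnorm2 /skew_part /mxtrace !sum3 !mxE !sum3 !mxE !eps_epst /epst /=.
by field; rewrite ?pnatr_eq0.
Qed.

Lemma vi_alg (M : 'M[R]_3) :
  3^-1 * (\sum_(l < 3) M l l) ^+ 2 <= fnorm2 (sym_part M).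
Proof.
rewrite /fnorm2 /sym_part /mxtrace !sum3 !mxE !sum3 !mxE.
set a := M i0 i0; set b := M i1 i1; set c := M i2 i2.
set p := M i0 i1; set q := M i1 i0; set s := M i0 i2; set t := M i2 i0.
set u := M i1 i2; set w := M i2 i1.
have h1 : 0 <= (a - b) ^+ 2 by exact: sqr_ge0.
have h2 : 0 <= (b - c) ^+ 2 by exact: sqr_ge0.
have h3 : 0 <= (a - c) ^+ 2 by exact: sqr_ge0.
have h4 : 0 <= (p + q) ^+ 2 by exact: sqr_ge0.
have h5 : 0 <= (s + t) ^+ 2 by exact: sqr_ge0.
have h6 : 0 <= (u + w) ^+ 2 by exact: sqr_ge0.
rewrite -subr_ge0.
have -> : 2^-1 * (a + a) * (2^-1 * (a + a)) + 2^-1 * (q + p) * (2^-1 * (q + p)) +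
  2^-1 * (t + s) * (2^-1 * (t + s)) +
  (2^-1 * (p + q) * (2^-1 * (p + q)) + 2^-1 * (b + b) * (2^-1 * (b + b)) +
   2^-1 * (w + u) * (2^-1 * (w + u))) +
  (2^-1 * (s + t) * (2^-1 * (s + t)) + 2^-1 * (u + w) * (2^-1 * (u + w)) +
   2^-1 * (c + c) * (2^-1 * (c + c))) - 3^-1 * (a + b + c) ^+ 2 =
  3^-1 * ((a - b) ^+ 2 + (b - c) ^+ 2 + (a - c) ^+ 2) + 2^-1 * ((p + q) ^+ 2 + (s + t) ^+ 2 + (u + w) ^+ 2).
  by field; rewrite ?pnatr_eq0.
by rewrite addr_ge0 // mulr_ge0 // ?addr_ge0 // invr_ge0.
Qed.

Lemma vii_alg (D : 'I_3 -> 'I_3 -> 'I_3 -> R) :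
  \sum_(i < 3) fnorm2 (skew_part (\matrix_(l, m) D m i l)) =
  2^-1 * fnorm2 (\matrix_(i, j) \sum_(k < 3) \sum_(l < 3) eps j k l * D k i l).
Proof.
rewrite /fnorm2 /skew_part /mxtrace !sum3 !mxE !sum3 !mxE !sum3 !eps_epst /epst /=.
by field; rewrite ?pnatr_eq0.
Qed.

Lemma curl_rel (D : 'I_3 -> 'I_3 -> 'I_3 -> R) (a : 'M[R]_3) :
  (forall j n, a j n = \sum_(m < 3) \sum_(l < 3) epst R n m l * D m j l) ->
  forall i m l, D m i l = D l i m + \sum_(j < 3) epst R j m l * a i j.
Proof.
move=> hc i m l; rewrite sum3 !hc !sum3.
by case: (ord3 m) => [->|[->|->]]; case: (ord3 l) => [->|[->|->]]; rewrite /epst /=; ring.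
Qed.

Lemma tr_form (A a : 'M[R]_3) : \tr (A^T *m a *m A^T *m a) =
  \sum_(i < 3) \sum_(j < 3) (\sum_(n < 3) A i n * a j n) * (\sum_(n < 3) A j n * a i n).
Proof. by rewrite /mxtrace; do 5 rewrite ?sum3 ?mxE; ring. Qed.
End M.

Unset Implicit Arguments.
Set Strict Implicit.

Theorem proposition4p3 (R : realType) (O : set (pt R)) (F : pt R -> 'M[R]_3)
  (alpha : 'M[R]_3) :
  open O -> C2_mx_on O F -> SO3_valued O F ->
  (forall x, O x -> curl F x = alpha) ->
  (* (i) *)
  (forall x, O x -> forall i : 'I_3,
     divrow F i x = \sum_(j < 3) \sum_(k < 3) eps i j k * rowdot alpha (F x) j k) /\
  (* (ii), componentwise: l-th component of Delta F_i *)
  (forall x, O x -> forall i l : 'I_3,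
     lap (fun y => F y i l) x =
     \sum_(j < 3) \sum_(k < 3) eps i j k * pd l (fun y => rowdot alpha (F y) j k) x) /\
  (* (iii) *)
  (forall x, O x ->
     gradnorm2 F x = - \tr ((F x)^T *m alpha *m (F x)^T *m alpha)) /\
  (* (iv) *)
  (forall x, O x ->
     \tr ((F x)^T *m alpha *m (F x)^T *m alpha) =
     fnorm2 (sym_part ((F x)^T *m alpha)) - fnorm2 (skew_part ((F x)^T *m alpha))) /\
  (* (v) *)
  (forall x0, O x0 -> F x0 = 1%:M ->
     \sum_(i < 3) (divrow F i x0) ^+ 2 = 2 * fnorm2 (skew_part alpha)) /\
  (* (vi) *)
  (forall x, O x ->
     \sum_(i < 3) fnorm2 (sym_part (gradrow F i x)) >=
     3^-1 * \sum_(i < 3) (divrow F i x) ^+ 2) /\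
  (* (vii) *)
  (forall x, O x ->
     \sum_(i < 3) fnorm2 (skew_part (gradrow F i x)) = 2^-1 * fnorm2 alpha).
Proof.
move=> oO C2 SO cH.
pose D (y : pt R) (m i l : 'I_3) := pd m (fun z => F z i l) y.
have Fd : forall y, O y -> forall i l m, derivable (fun z => F z i l) y (ek m).
  by move=> y Oy i l m; have [_ [d _]] := C2 i l y Oy; exact: d.
have Fdd : forall y, O y -> forall i l m k, derivable (pd m (fun z => F z i l)) y (ek k).
  by move=> y Oy i l m k; have [_ [_ [_ [d _]]]] := C2 i l y Oy; exact: d.
have Hcol : forall y, O y -> forall q n, \sum_(p < 3) F y p q * F y p n = (q == n)%:R.
  move=> y Oy q n; have [h _] := SO y Oy.
  have := congr1 (fun M : 'M[R]_3 => M q n) h; rewrite !mxE => <-.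
  by apply: eq_bigr => p _; rewrite mxE.
have Hrow : forall y, O y -> forall q n, \sum_(p < 3) F y q p * F y n p = (q == n)%:R.
  move=> y Oy q n; have [h _] := SO y Oy.
  have h' : F y *m (F y)^T = 1%:M by apply: mulmx1C.
  have := congr1 (fun M : 'M[R]_3 => M q n) h'; rewrite !mxE => <-.
  by apply: eq_bigr => p _; rewrite mxE.
have Hcross : forall y, O y -> forall p m n,
    \sum_(q < 3) \sum_(s < 3) epst R q p s * F y s m * F y q n =
    \sum_(b < 3) F y p b * epst R b m n.
  by move=> y Oy; have [h1 h2] := SO y Oy; exact: cross_SO3.
have Hcurl : forall y, O y -> forall j n,
    alpha j n = \sum_(m < 3) \sum_(l < 3) epst R n m l * D y m j l.
  move=> y Oy j n; rewrite -(cH y Oy) mxE.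
  by apply: eq_bigr => m _; apply: eq_bigr => l _; rewrite eps_epst.
have Hsk : forall y, O y -> forall m k p,
    \sum_(q < 3) (D y m k q * F y p q + F y k q * D y m p q) = 0.
  move=> y Oy m k p.
  have E : pd m (fun z => \sum_(q < 3) F z k q * F z p q) y = 0.
    rewrite /pd (@dloc R O _ (fun _ => (k == p)%:R)) //; first exact: derive_cst.
    by move=> z Oz; exact: Hrow z Oz k p.
  rewrite -[in RHS]E /pd dsum3 => [|q]; last by apply: dvM; apply: Fd.
  apply: eq_bigr => q _; rewrite dM; try by apply: Fd.
  by rewrite /D /pd; ring.
have Hi : forall y, O y -> forall i,
    divrow F i y = \sum_(j < 3) \sum_(k < 3) eps i j k * rowdot alpha (F y) j k.
  move=> y Oy i; rewrite /divrow /rowdot.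
  under [RHS]eq_bigr do under eq_bigr do rewrite eps_epst.
  exact: (alg_i (Hcol y Oy) (Hcross y Oy) (Hsk y Oy) (Hcurl y Oy) i).
have rowd : forall y, O y -> forall j k l,
    derivable (fun z => rowdot alpha (F z) j k) y (ek l).
  move=> y Oy j k l; rewrite /rowdot; apply: dvsum3 => n; apply: dvZ; exact: Fd.
have rowD : forall y, O y -> forall j k l,
    pd l (fun z => rowdot alpha (F z) j k) y = \sum_(n < 3) alpha j n * D y l k n.
  move=> y Oy j k l; rewrite /pd /rowdot dsum3 => [|n]; last by apply: dvZ; exact: Fd.
  by apply: eq_bigr => n _; rewrite dZ //; exact: Fd.
have Hii : forall x, O x -> forall i l : 'I_3,
     lap (fun y => F y i l) x =
     \sum_(j < 3) \sum_(k < 3) eps i j k * pd l (fun y => rowdot alpha (F y) j k) x.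
  move=> x Ox i l.
  have A : forall m, pd m (pd m (fun z => F z i l)) x = pd l (pd m (fun z => F z i m)) x.
    move=> m.
    rewrite {1}/pd (@dloc R O _ (fun z => pd l (fun w => F w i m) z + \sum_(j < 3) epst R j m l * alpha i j)) //.
      rewrite dDc; last exact: Fdd.
      exact: (@schwarz_pd R O (fun w => F w i m) x l m oO Ox (C2 i m)).
    move=> z Oz; exact: (curl_rel (Hcurl z Oz) i m l).
  rewrite /lap; under eq_bigr do rewrite A.
  transitivity (pd l (fun z => divrow F i z) x).
    rewrite /divrow /pd dsum3 // => m.
    exact: Fdd.
  rewrite /pd (@dloc R O _ (fun z => \sum_(j < 3) \sum_(k < 3) eps i j k * rowdot alpha (F z) j k)) //; last first.
    by move=> z Oz; exact: Hi.
  rewrite dsum3 => [|j]; last first.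
    apply: dvsum3 => k; apply: dvZ; exact: rowd.
  apply: eq_bigr => j _; rewrite dsum3 => [|k]; last by apply: dvZ; exact: rowd.
  by apply: eq_bigr => k _; rewrite dZ //; exact: rowd.
split; first exact: Hi.
split; first exact: Hii.
split.
  move=> x Ox.
  have B : forall i m, \sum_(l < 3) D x m i l ^+ 2 =
      - \sum_(l < 3) F x i l * pd m (pd m (fun z => F z i l)) x.
    move=> i m.
    have E : pd m (fun z => \sum_(l < 3) F z i l * pd m (fun w => F w i l) z) x = 0.
      rewrite {1}/pd (@dloc R O _ (fun _ => 0)) //; first exact: derive_cst.
      move=> z Oz; have := Hsk z Oz m i i.
      have -> : \sum_(q < 3) (D z m i q * F z i q + F z i q * D z m i q) =
                2 * \sum_(l < 3) F z i l * pd m (fun w => F w i l) z.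
        by rewrite /D !sum3; ring.
      move/eqP; rewrite mulf_eq0 pnatr_eq0 /= => /eqP ->; by [].
    have E2 : \sum_(l < 3) (F x i l * pd m (pd m (fun z => F z i l)) x + D x m i l ^+ 2) = 0.
      rewrite -[in RHS]E {3}/pd dsum3 => [|l]; last by apply: dvM; [exact: Fd|exact: Fdd].
      apply: eq_bigr => l _; rewrite dM; [|exact: Fd|exact: Fdd].
      by rewrite /D /pd; ring.
    move: E2; rewrite big_split /= => E2.
    by apply/eqP; rewrite -subr_eq0 opprK addrC E2.
  have G : gradnorm2 F x = - \sum_(i < 3) \sum_(l < 3) F x i l * lap (fun z => F z i l) x.
    rewrite /gradnorm2 /lap.
    transitivity (\sum_(i < 3) \sum_(m < 3) \sum_(l < 3) D x m i l ^+ 2).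
      by apply: eq_bigr => i _; rewrite exchange_big.
    under eq_bigr do under eq_bigr do rewrite B.
    rewrite -sumrN; apply: eq_bigr => i _.
    rewrite sumrN exchange_big; congr (- _); apply: eq_bigr => l _.
    by rewrite mulr_sumr.
  rewrite G.
  under eq_bigr => i _ do under eq_bigr => l _ do rewrite (Hii x Ox).
  under eq_bigr => i _ do under eq_bigr => l _ do under eq_bigr => j _ do
    under eq_bigr => k _ do rewrite (rowD x Ox) eps_epst.
  rewrite (alg_iii (Hcol x Ox) (Hcross x Ox) (Hsk x Ox) (Hcurl x Ox)).
  by rewrite tr_form.
split.
  move=> x Ox; by rewrite -mulmxA tr_sq.
split.
  move=> x0 Ox0 F1.
  under eq_bigr do rewrite (Hi x0 Ox0) F1.
  exact: v_alg.
split.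
  move=> x Ox; rewrite mulr_sumr; apply: ler_sum => i _.
  have -> : divrow F i x = \sum_(l < 3) (gradrow F i x) l l.
    by apply: eq_bigr => l _; rewrite mxE.
  exact: vi_alg.
move=> x Ox; rewrite -(cH x Ox).
exact: (vii_alg (D x)).
Qed.
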